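(* Let $n,m\in\mathbb{N}$, $k\in\mathbb{N}$, $p\in\mathbb{N}\cup\{0\}$, and let $F: V(L_n)\to V(D_m)$ satisfy $$4^{p}d_{L_n}(u,v)\le d_{D_m}(Fu,Fv)\le 4^{k}\cdot 4^{p}d_{L_n}(u,v)\quad\text{for all } u,v\in V(L_n).$$ Let $h\in\{1,\dots,n\}$ satisfy $\frac{4^h}{3}-1-4^k\ge 4^{h-1}$. Let $C_{4^h}$ be an isometric cycle of length $4^h$ in $L_n$, and let $FC_{4^h}$ be the closed walk in $D_m$ obtained by joining, for each edge $uv$ of $C_{4^h}$, the points $Fu$ and $Fv$ by a chosen shortest path in $D_m$. Then the subgraph of $D_m$ spanned by $FC_{4^h}$ contains a cycle whose length is between $4^{p+h-1}$ and $4^{p+h+k}$.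
   Context: All graphs are unweighted (each edge has length $1$) and carry the shortest-path metric. Diamond graphs: $D_0$ is a single edge; $D_m$ is obtained from $D_{m-1}$ by replacing every edge $uv$ by a quadrilateral $u,a,v,b$ with edges $ua,av,vb,bu$. Laakso graphs: $L_0$ is a single edge; $L_1$ is the graph with vertices $x_1,\dots,x_6$ and edges $x_1x_2,x_2x_3,x_2x_4,x_3x_5,x_4x_5,x_5x_6$; $L_n$ is obtained from $L_{n-1}$ by replacing each edge $uv$ by a copy of $L_1$ with $u,v$ identified with $x_1,x_6$. A cycle in $L_n$ is isometric if the distance in $L_n$ between any two of its vertices equals their distance along the cycle. *)

(* Defs.v *)
From mathcomp Require Import all_boot.
From mathcomp Require Import all_algebra.
Set Implicit Arguments. Unset Strict Implicit. Unset Printing Implicit Defensive.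

(* A finite undirected simple graph with vertex set {0,...,nv-1},
   given by a list of (unordered) edges. *)
Record graph := Graph { nv : nat; edges : seq (nat * nat) }.

Definition adj (G : graph) : rel nat :=
  fun u v => ((u, v) \in edges G) || ((v, u) \in edges G).

Definition edge_graph : graph := Graph 2 [:: (0, 1)].

Definition diamond_step (G : graph) : graph :=
  Graph (nv G + 2 * size (edges G))
    (flatten (mkseq (fun i =>
       let e := nth (0, 0) (edges G) i in
       let a := nv G + 2 * i in let b := a.+1 in
       [:: (e.1, a); (a, e.2); (e.2, b); (b, e.1)]) (size (edges G)))).

(* Laakso step: edge uv (the i-th edge) is replaced by a copy of L_1 with
   x1 = u, x6 = v and new vertices x2..x5 = nv+4i, ..., nv+4i+3. *)
Definition laakso_step (G : graph) : graph :=
  Graph (nv G + 4 * size (edges G))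
    (flatten (mkseq (fun i =>
       let e := nth (0, 0) (edges G) i in
       let x2 := nv G + 4 * i in let x3 := x2.+1 in
       let x4 := x2.+2 in let x5 := x2.+3 in
       [:: (e.1, x2); (x2, x3); (x2, x4); (x3, x5); (x4, x5); (x5, e.2)])
       (size (edges G)))).

Definition Diamond (m : nat) : graph := iter m diamond_step edge_graph.
Definition Laakso (n : nat) : graph := iter n laakso_step edge_graph.

(* a walk u = s_0, s_1, ..., s_l = v, stored as the list [s_1; ...; s_l];
   its length is size s *)
Definition walk (G : graph) (u : nat) (s : seq nat) (v : nat) : bool :=
  path (adj G) u s && (last u s == v).

Definition is_dist (G : graph) (u v d : nat) : Prop :=
  (exists s, walk G u s v /\ size s = d) /\
  (forall s, walk G u s v -> d <= size s).

Definition is_cycle (G : graph) (c : seq nat) : Prop :=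
  3 <= size c /\ uniq c /\ cycle (adj G) c.

Definition cyc_dist (N i j : nat) : nat :=
  minn (maxn i j - minn i j) (N - (maxn i j - minn i j)).

Definition isometric_cycle (G : graph) (c : seq nat) : Prop :=
  is_cycle G c /\
  forall i j, i < size c -> j < size c ->
    is_dist G (nth 0 c i) (nth 0 c j) (cyc_dist (size c) i j).

Definition walk_edges (u : nat) (s : seq nat) : seq (nat * nat) :=
  zip (u :: s) s.

Definition cycle_edges (c : seq nat) : seq (nat * nat) :=
  zip c (rot 1 c).

(* Main.v *)
Require Import Defs.
From mathcomp Require Import all_boot all_algebra.
From mathcomp Require Import zify ring lra.
From Stdlib Require Import Classical.

Section Gen.
Variable e : rel nat.
Hypothesis esym : symmetric e.

Lemma path_rev u s w : path e u s -> last u s = w ->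
  exists s', path e w s' /\ last w s' = u /\ size s' = size s.
Proof.
elim: s u => [|v s IH] u /=.
  by move=> _ <-; exists [::].
move=> /andP[euv pv] lw; have [s' [p' [l' sz]]] := IH v pv lw.
exists (rcons s' u); rewrite rcons_path p' l' last_rcons size_rcons sz.
by rewrite esym euv.
Qed.

Lemma path_zip_mem u s : forall (r : rel nat),
  (forall x y, (x, y) \in zip (u :: s) s -> r x y) -> path r u s.
Proof.
elim: s u => [|v s IH] u r H //=.
apply/andP; split; first by apply: H; rewrite /= inE eqxx.
apply: IH => x y Hxy; apply: H; by rewrite /= inE Hxy orbT.
Qed.

Lemma path_mem_zip u s : path e u s -> forall x y, (x, y) \in zip (u :: s) s -> e x y.
Proof.
elim: s u => [|v s IH] u //= /andP[euv ps] x y.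
rewrite inE => /orP[/eqP[-> ->] //|]; exact: IH.
Qed.

Lemma zip_rcons_last (y : nat) (s : seq nat) (x : nat) : zip (y :: s) (rcons s x) = zip (y :: rcons s x) (rcons s x).
Proof. by elim: s y => [|a s IH] y //=; rewrite IH. Qed.

Lemma cycle_mem_edges c : cycle e c -> forall x y, (x, y) \in cycle_edges c -> e x y.
Proof.
case: c => [|u s] //= H x y; rewrite /cycle_edges rot1_cons zip_rcons_last.
exact: path_mem_zip.
Qed.

Lemma path_infix x p A1 v rest : x :: p = A1 ++ v :: rest -> path e x p -> path e v rest.
Proof.
case: A1 => [|y A1] /= [-> ->] //.
by rewrite cat_path => /andP[_ /= /andP[]].
Qed.

Lemma seg_lemma (pA pB pR : pred nat) r : forall u s,
  pB u -> pR u -> all (fun y => ~~ pA y && ~~ pB y && pR y) s -> ~~ pA (last u s) ->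
  path e u (s ++ r) -> all pR r -> pA (last u (s ++ r)) ->
  exists u' s' v, [/\ pB u', pA v, pR u' && pR v, path e u' (rcons s' v) &
     all (fun y => ~~ pA y && ~~ pB y && pR y) s'].
Proof.
elim: r => [|v r IH] u s Bu Ru As nAl.
  by rewrite cats0 => _ _ H; rewrite H in nAl.
rewrite cat_path /= => /andP[ps /andP[elv pvr]] /andP[Rv Rr].
rewrite last_cat /= => Al.
case Av: (pA v).
  exists u, s, v; split => //; by rewrite ?rcons_path ?ps ?Ru ?Rv.
case Bv: (pB v).
  apply: (IH v [::]) => //=; by rewrite Av.
apply: (IH u (rcons s v)) => //.
- by rewrite all_rcons /= Av Bv Rv As.
- by rewrite last_rcons Av.
- by rewrite cat_rcons cat_path ps /= elv pvr.
- by rewrite cat_rcons last_cat.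
Qed.

End Gen.

Lemma ar1 a b s L : 3 + a + b + s < L -> a <= b -> 2 * (a.+1) < L.
Proof. lia. Qed.
Lemma ar2 a b s L : 3 + a + b + s < L -> b < a -> 2 * (b.+1) < L.
Proof. lia. Qed.
Lemma ar3 (a b s : seq nat) (x u : nat) : ((size (a ++ x :: b ++ [:: u])).+1 + size s = 3 + size a + size b + size s)%N.
Proof. rewrite !size_cat /= size_cat /=; lia. Qed.

Lemma key (e : rel nat) (esym : symmetric e) (L : nat)
  (NoBig : forall c', 3 <= size c' -> uniq c' -> cycle e c' -> size c' < L)
  a Q (HQ : path e a Q) (HQu : uniq (a :: Q)) b R (HR : path e b R)
  (HRl : last b R = a) (Hb : last a Q = b) x (Hx : x \in a :: Q) (HxR : x \notin b :: R) :
  exists y, y \in b :: R /\ exists s, [/\ path e x s, last x s = y & 2 * size s < L].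
Proof.
have aR : a \in b :: R by rewrite -HRl mem_last.
have xa : x != a by apply: contraNneq HxR => ->.
have {}Hx : x \in Q by move: Hx; rewrite inE (negPf xa).
case/splitPr: Hx HQ HQu Hb => Q1 Q2 HQ HQu Hb.
have bR : b \in b :: R by rewrite inE eqxx.
have bQ2 : b \in Q2.
  move: Hb; rewrite last_cat /= => Hb.
  have : b \in x :: Q2 by rewrite -Hb mem_last.
  rewrite inE => /orP[/eqP bx|//]; by rewrite -bx bR in HxR.
have HQu' : uniq ((a :: Q1) ++ x :: Q2) by [].
move: (HQu'); rewrite cat_uniq => /and3P[uA /hasPn dAB uB].
have disj : forall y, y \in Q2 -> y \notin a :: Q1.
  by move=> y yQ2; apply: dAB; rewrite inE yQ2 orbT.
have xnA : x \notin a :: Q1 by apply: dAB; rewrite inE eqxx.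
have xnQ2 : x \notin Q2 by move: uB => /andP[].
have aRR : all (mem (b :: R)) R by apply/allP => y yR; rewrite /= inE yR orbT.
have lA : (mem (a :: Q1)) (last b R) by rewrite /= HRl inE eqxx.
have [u [s [v [Bu Av /andP[Ru Rv] pth alls]]]] :=
  @seg_lemma e (mem (a :: Q1)) (mem Q2) (mem (b :: R)) R b [::] bQ2 bR isT (disj _ bQ2)
    HR aRR lA.
have Hl : last u (rcons s v) = v by rewrite last_rcons.
move: Hl; case: (shortenP pth) => p' pp' up' sub Hl.
case/lastP: p' pp' up' sub Hl => [|s' w] pp' up' sub Hl.
  by rewrite /= in Hl; move: (disj _ Bu); rewrite Hl; move: Av; rewrite /= => ->.
rewrite last_rcons in Hl; subst w.
have s's : {subset s' <= s}.
  move=> y ys'; have : y \in rcons s v by apply: sub; rewrite mem_rcons inE ys' orbT.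
  rewrite mem_rcons inE => /orP[/eqP yv|//].
  by move: up'; rewrite /= rcons_uniq -yv ys' andbF.
have [A1 [A2 EA]] : exists A1 A2, a :: Q1 = A1 ++ v :: A2.
  by case/splitPr: Av => A1 A2; exists A1, A2.
have [B1 [B2 EB]] : exists B1 B2, Q2 = B1 ++ u :: B2.
  by case/splitPr: Bu => B1 B2; exists B1, B2.
have Efull : a :: (Q1 ++ x :: Q2) = A1 ++ v :: (A2 ++ x :: B1 ++ u :: B2).
  have -> : a :: (Q1 ++ x :: Q2) = (a :: Q1) ++ x :: Q2 by [].
  by rewrite EA EB -catA.
have pv := @path_infix e _ _ _ _ _ Efull HQ.
set K := v :: A2 ++ x :: B1 ++ [:: u].
have EK : v :: (A2 ++ x :: B1 ++ u :: B2) = K ++ B2 by rewrite /K /= -catA /= -catA.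
have uK : uniq K.
  move: HQu; rewrite Efull EK cat_uniq => /and3P[_ _].
  by rewrite cat_uniq => /andP[].
have Ksub : forall y, y \in K -> [|| y \in a :: Q1, y == x | y \in Q2].
  move=> y yK.
  have : y \in a :: (Q1 ++ x :: Q2) by rewrite Efull EK !mem_cat yK !orbT.
  have -> : a :: (Q1 ++ x :: Q2) = (a :: Q1) ++ x :: Q2 by [].
  by rewrite mem_cat inE.
have pK : path e v (A2 ++ x :: B1 ++ [:: u]).
  have E2 : A2 ++ x :: B1 ++ u :: B2 = (A2 ++ x :: B1 ++ [:: u]) ++ B2.
    by rewrite -catA /= -catA.
  by move: pv; rewrite E2 cat_path => /andP[].
set c' := K ++ s'.
have lK : last v (A2 ++ x :: B1 ++ [:: u]) = u by rewrite last_cat /= last_cat.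
have cyc : cycle e c'.
  by rewrite /c' /K /= rcons_cat cat_path pK lK pp'.
have uc : uniq c'.
  rewrite /c' cat_uniq uK /=; move: up'; rewrite /= rcons_uniq => /andP[_ /andP[_ ->]].
  rewrite andbT; apply/hasPn => y ys'; apply/negP => yK.
  have := allP alls y (s's _ ys'); rewrite /= => /andP[/andP[nA nB] yR].
  case/or3P: (Ksub y yK) => [|/eqP yx|]; [by rewrite (negPf nA) | | by rewrite (negPf nB)].
  by rewrite -yx yR in HxR.
have szc : size c' = 3 + size A2 + size B1 + size s'.
  by rewrite /c' /K size_cat /= ar3.
have sz3 : 3 <= size c' by rewrite szc -!addnA leq_addr.
have := NoBig c' sz3 uc cyc; rewrite szc => Lbig.
case: (leqP (size A2) (size B1)) => HAB.
- have pA2 : path e v (rcons A2 x) by move: pK; rewrite cat_path /= rcons_path => /andP[-> /andP[-> _]].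
  have [s2 [ps2 [ls2 szs2]]] := @path_rev e esym _ _ _ pA2 (last_rcons _ _ _).
  exists v; split; first exact: Rv; exists s2; split => //; rewrite szs2 size_rcons; exact: ar1 Lbig HAB.
- have Ex : v :: (A2 ++ x :: B1 ++ u :: B2) = (v :: A2) ++ x :: (B1 ++ u :: B2) by [].
  have px := @path_infix e _ _ _ _ _ Ex pv.
  have pB : path e x (rcons B1 u) by move: px; rewrite -cat_rcons cat_path => /andP[].
  exists u; split; first exact: Ru; exists (rcons B1 u); split => //; first by rewrite last_rcons.
  rewrite size_rcons; exact: ar2 Lbig HAB.
Qed.

Lemma ivt (e : rel nat) (P2 P3 : nat -> Prop) x s : path e x s -> P3 x -> P2 (last x s) ->
  (forall y, y \in x :: s -> P2 y \/ P3 y) ->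
  exists y, y \in x :: s /\ P3 y /\ (P2 y \/ exists y', e y y' /\ P2 y').
Proof.
elim: s x => [|v s IH] x /=.
  by move=> _ H3 H2 _; exists x; split; [rewrite inE eqxx|split; [|left]].
move=> /andP[exv pv] H3 H2 Hc.
case: (classic (P3 v)) => H3v.
  have Hc' : forall y, y \in v :: s -> P2 y \/ P3 y.
    by move=> y ys; apply: Hc; rewrite inE ys orbT.
  have [y [ys [P3y Hy]]] := IH v pv H3v H2 Hc'.
  by exists y; split => //; rewrite inE ys orbT.
have vin : v \in x :: v :: s by rewrite !inE eqxx orbT.
have [] := Hc v vin => // P2v.
by exists x; split; [rewrite inE eqxx|split => //; right; exists v].
Qed.

Lemma adj_sym G : symmetric (adj G).
Proof. by move=> u v; rewrite /adj orbC. Qed.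

Definition reach G r u v := exists s, walk G u s v /\ size s <= r.

Lemma reach_refl G r u : reach G r u u.
Proof. by exists [::]; rewrite /walk /= eqxx. Qed.

Lemma reach_mono G r r' u v : r <= r' -> reach G r u v -> reach G r' u v.
Proof. move=> H [s [w sz]]; exists s; split => //; exact: leq_trans H. Qed.

Lemma reach_sym G r u v : reach G r u v -> reach G r v u.
Proof.
move=> [s [/andP[ps /eqP ls] sz]].
have [s' [ps' [ls' sz']]] := @path_rev (adj G) (@adj_sym G) _ _ _ ps ls.
by exists s'; rewrite /walk ps' ls' eqxx sz'.
Qed.

Lemma reach_trans G r1 r2 u v w : reach G r1 u v -> reach G r2 v w -> reach G (r1 + r2) u w.
Proof.
move=> [s1 [/andP[p1 /eqP l1] z1]] [s2 [/andP[p2 /eqP l2] z2]].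
exists (s1 ++ s2); rewrite /walk cat_path p1 l1 p2 last_cat l1 l2 eqxx size_cat.
split => //; exact: leq_add.
Qed.

Lemma reach_edge G u v : adj G u v -> reach G 1 u v.
Proof. by move=> H; exists [:: v]; rewrite /walk /= H eqxx. Qed.

Lemma reach_dist G r u v : reach G r u v -> exists d, is_dist G u v d /\ d <= r.
Proof.
elim: r => [|r IH].
  move=> [s [w sz]]; exists 0; split => //; split; first by exists s; split => //; apply/eqP; rewrite -leqn0.
  by move=> s' _.
move=> H.
case: (classic (reach G r u v)) => Hr.
  by have [d [Hd dr]] := IH Hr; exists d; split => //; apply: leq_trans dr _.
exists r.+1; split => //; split.
  move: H => [s [w sz]]; exists s; split => //.
  apply/eqP; rewrite eqn_leq sz /=; rewrite ltnNge; apply/negP => sr; apply: Hr; by exists s.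
move=> s w; rewrite ltnNge; apply/negP => sr; apply: Hr; exists s; split => //.
Qed.

Lemma walk_split G u s v y : walk G u s v -> y \in s ->
  exists r1 r2, [/\ reach G r1 u y, reach G r2 y v & r1 + r2 = size s].
Proof.
move=> /andP[ps /eqP ls] ys; move: ps ls; case/splitPr: ys => p1 p2.
rewrite cat_path last_cat /= => /andP[p1p /andP[ey p2p]] ls.
exists (size p1).+1, (size p2); split.
- by exists (rcons p1 y); rewrite /walk rcons_path p1p ey last_rcons eqxx size_rcons.
- by exists p2; rewrite /walk p2p ls eqxx.
- by rewrite size_cat /= addnS.
Qed.

Lemma laakso_edges n : forall ed, ed \in edges (Laakso n) ->
  ed.1 < nv (Laakso n) /\ ed.2 < nv (Laakso n).
Proof.
elim: n => [|n IH] ed.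
  by rewrite /Laakso /= inE => /eqP ->.
rewrite /Laakso iterS -/(Laakso n) /laakso_step /= /mkseq => /flatten_mapP [i].
rewrite mem_iota add0n => /andP[_ iS].
move: (IH _ (mem_nth (0, 0) iS)).
case: (nth (0, 0) (edges (Laakso n)) i) => a b /= [H1 H2].
move: iS H1 H2; set E := edges (Laakso n); set N := nv (Laakso n) => iS H1 H2.
rewrite !inE => /orP[/eqP->|/orP[/eqP->|/orP[/eqP->|/orP[/eqP->|/orP[/eqP->|/eqP->]]]]] /=;
  split; clearbody E N; lia.
Qed.

Lemma adj_bound G : (forall ed, ed \in edges G -> ed.1 < nv G /\ ed.2 < nv G) ->
  forall x y, adj G x y -> x < nv G.
Proof.
move=> H x y /orP[] Hxy; [exact: (H _ Hxy).1 | exact: (H _ Hxy).2].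
Qed.

Definition enorm (ed : nat * nat) := (minn ed.1 ed.2, maxn ed.1 ed.2).

Lemma cycle_count (c : seq nat) (W : seq (nat * nat)) : 3 <= size c -> uniq c ->
  (forall x y, (x, y) \in cycle_edges c -> ((x, y) \in W) || ((y, x) \in W)) ->
  size c <= size W.
Proof.
case: c => [|x0 s] //= s3 uc HW.
set n := (size s).+1.
pose sc i := if i.+1 < n then i.+1 else 0.
pose c := x0 :: s.
have edi : forall i, i < n -> nth (0, 0) (cycle_edges c) i = (nth 0 c i, nth 0 c (sc i)).
  move=> i ilt; rewrite /cycle_edges /c rot1_cons nth_zip ?size_rcons //.
  congr (_, _); rewrite nth_rcons /sc.
  case: ltnP => H1; first by rewrite ifT.
  have -> : i = size s by rewrite /n in ilt; lia.
  by rewrite eqxx ltnn.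
have sce : size (cycle_edges c) = n by rewrite /cycle_edges /c rot1_cons size_zip size_rcons /= minnn.
pose g i := enorm (nth 0 c i, nth 0 c (sc i)).
have gin : forall i, i \in iota 0 n -> g i \in map enorm W.
  move=> i; rewrite mem_iota add0n => /andP[_ ilt].
  have := HW (nth 0 c i) (nth 0 c (sc i)); rewrite -edi // mem_nth ?sce // => /(_ isT) /orP[] H.
    by rewrite /g -edi // (map_f enorm H).
  have -> : g i = enorm (nth 0 c (sc i), nth 0 c i) by rewrite /g /enorm /= minnC maxnC.
  by rewrite (map_f enorm H).
have ug : uniq (map g (iota 0 n)).
  rewrite map_inj_in_uniq ?iota_uniq // => i j; rewrite !mem_iota !add0n => /andP[_ ilt] /andP[_ jlt].
  have sclt : forall k, k < n -> sc k < n by move=> k kl; rewrite /sc; case: ifP => //; lia.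
  have nthe : forall a b, a < n -> b < n -> nth 0 c a = nth 0 c b -> a = b.
    by move=> a b al bl E; apply/eqP; rewrite -(@nth_uniq _ 0 c a b al bl uc) E.
  rewrite /g /enorm => [[]] E1 E2.
  have [[A1 A2]|[A1 A2]] : (nth 0 c i = nth 0 c j /\ nth 0 c (sc i) = nth 0 c (sc j)) \/
                   (nth 0 c i = nth 0 c (sc j) /\ nth 0 c (sc i) = nth 0 c j) by lia.
    exact: nthe.
  have B1 := nthe _ _ ilt (sclt _ jlt) A1.
  have B2 := nthe _ _ (sclt _ ilt) jlt A2.
  move: B1 B2; rewrite /sc /n in ilt jlt *; case: ifP; case: ifP; lia.
have gsub : {subset map g (iota 0 n) <= map enorm W} by move=> z /mapP [i ii ->]; exact: gin.
by have := uniq_leq_size ug gsub; rewrite size_map size_iota size_map.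
Qed.

Lemma size_flat_le (f : nat -> seq (nat * nat)) M s :
  (forall t, t \in s -> size (f t) <= M) -> size (flatten (map f s)) <= size s * M.
Proof.
elim: s => [|t s IH] //= H.
rewrite size_cat mulSn leq_add //; first by apply: H; rewrite inE eqxx.
by apply: IH => t' ts; apply: H; rewrite inE ts orbT.
Qed.

Lemma comb N dl t1 t2 t3 : 3 * dl + 3 <= N -> t1 <= dl.+1 -> dl.+1 <= t2 -> t2 <= 2 * dl.+1 ->
  2 * dl.+1 <= t3 -> t3 <= N -> cyc_dist N (t1 %% N) (t2 %% N) <= dl ->
  cyc_dist N (t1 %% N) (t3 %% N) <= dl -> cyc_dist N (t2 %% N) (t3 %% N) <= dl -> False.
Proof.
move=> H0 H1 H2 H3 H4 H5.
rewrite (@modn_small t1); last lia.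
rewrite (@modn_small t2); last lia.
case: (ltnP t3 N) => H6.
  rewrite modn_small // /cyc_dist; lia.
have -> : t3 = N by lia.
rewrite modnn /cyc_dist; lia.
Qed.

Lemma arith_fin M L r0 r1 r2 r2' r3 r3' : 2 * r1 <= M -> r0 <= 1 -> 2 * r2 < L -> 2 * r2' <= M ->
  2 * r3 < L -> 2 * r3' <= M ->
  [/\ r1 + r0 + r2 + r2' <= M + L, r1 + r3 + r3' <= M + L & r2' + r2 + r0 + r3 + r3' <= M + L].
Proof. move=> *; split; lia. Qed.

Arguments reach_sym {G r u v}.
Arguments reach_trans {G r1 r2 u v w}.
Arguments reach_dist {G r u v}.

Lemma main_aux (n m k p : nat) (F : nat -> nat)
  (Hk : 1 <= k)
  (Hbil : forall u v du dv,
     u < nv (Laakso n) -> v < nv (Laakso n) ->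
     is_dist (Laakso n) u v du -> is_dist (Diamond m) (F u) (F v) dv ->
     4 ^ p * du <= dv <= 4 ^ k * 4 ^ p * du)
  (h : nat) (Hh1 : 1 <= h)
  (Hh : 3 * 4 ^ (h - 1) + 3 + 3 * 4 ^ k <= 4 ^ h)
  (c : seq nat) (Hcsize : size c = 4 ^ h)
  (Hc : isometric_cycle (Laakso n) c)
  (P : nat -> seq nat)
  (HP : forall i, i < size c ->
     let a := F (nth 0 c i) in
     let b := F (nth 0 c (i.+1 %% size c)) in
     walk (Diamond m) a (P i) b /\ is_dist (Diamond m) a b (size (P i))) :
  let W := flatten [seq walk_edges (F (nth 0 c i)) (P i) | i <- iota 0 (size c)] in
  exists c' : seq nat,
    is_cycle (Diamond m) c' /\
    (forall x y, (x, y) \in cycle_edges c' -> ((x, y) \in W) || ((y, x) \in W)) /\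
    (4 ^ (p + h - 1) <= size c' <= 4 ^ (p + h + k)).
Proof.
move=> W.
set N := size c.
set D := Diamond m in HP Hbil *.
set LL := Laakso n in Hbil Hc.
have e4h : 4 ^ h = 4 * 4 ^ (h - 1) by rewrite -expnS; congr (_ ^ _); lia.
have N4 : 4 <= N by rewrite /N Hcsize e4h; have := expn_gt0 4 (h - 1); lia.
pose M := 4 ^ k * 4 ^ p.
pose L := 4 ^ p * 4 ^ (h - 1).
have EL : 4 ^ (p + h - 1) = L by rewrite /L -expnD; congr (_ ^ _); lia.
have EU : 4 ^ (p + h + k) = N * M by rewrite /N Hcsize /M -!expnD; congr (_ ^ _); lia.
have L1 : 1 <= L by rewrite /L muln_gt0 !expn_gt0.
pose dl := 4 ^ (h - 1) + 4 ^ k.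
have dlN : 3 * dl + 3 <= N by rewrite /N Hcsize /dl; lia.
pose q := dl.+1.
pose st t := F (nth 0 c (t %% N)).
have stN : st N = st 0 by rewrite /st modnn mod0n.
have Hvert : forall i, i < N -> nth 0 c i < nv LL.
  move=> i iN; have [[_ [_ cyc]] _] := Hc.
  have := next_cycle cyc (mem_nth 0 iN); apply: adj_bound; exact: laakso_edges.
have Hcd : forall i j, i < N -> j < N -> is_dist LL (nth 0 c i) (nth 0 c j) (cyc_dist N i j).
  by move=> i j iN jN; apply: (proj2 Hc).
have HPi : forall t, t < N -> walk D (st t) (P t) (st t.+1) /\ size (P t) <= M.
  move=> t tN; have [Hw Hd] := HP t tN.
  rewrite /st (modn_small tN); split => //.
  have Hd1 : is_dist LL (nth 0 c t) (nth 0 c (t.+1 %% N)) 1.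
    have -> : 1 = cyc_dist N t (t.+1 %% N).
      rewrite /cyc_dist; case: (ltnP t.+1 N) => H.
        rewrite modn_small //; lia.
      have -> : t.+1 = N by lia.
      rewrite modnn; lia.
    by apply: Hcd => //; rewrite ltn_pmod //; lia.
  have N0 : 0 < N by lia.
  have := Hbil _ _ _ _ (Hvert _ tN) (Hvert _ (ltn_pmod t.+1 N0)) Hd1 Hd.
  move=> /andP[_ H]; rewrite muln1 in H; exact: H.
have N0 : 0 < N by lia.
have stE : forall t, t < N -> st t = F (nth 0 c t) by move=> t tN; rewrite /st modn_small.
have Wedge : forall t, t < N -> forall x y, (x, y) \in zip (st t :: P t) (P t) -> (x, y) \in W.
  move=> t tN x y H; apply/flatten_mapP; exists t; first by rewrite mem_iota.
  by rewrite /walk_edges -stE.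
pose adjH x y := ((x, y) \in W) || ((y, x) \in W).
have adjH_sym : symmetric adjH by move=> x y; rewrite /adjH orbC.
have WD : forall x y, (x, y) \in W -> adj D x y.
  move=> x y /flatten_mapP [t]; rewrite mem_iota add0n => /andP[_ tN].
  rewrite -stE // => H; have [/andP[pw _] _] := HPi t tN.
  exact: (@path_mem_zip _ _ _ pw _ _ H).
have HD : subrel adjH (adj D).
  move=> x y /orP[] H; first exact: WD.
  by rewrite adj_sym; apply: WD.
have segp : forall i d, i + d <= N ->
    path adjH (st i) (flatten (map P (iota i d))) /\ last (st i) (flatten (map P (iota i d))) = st (i + d).
  move=> i; elim=> [|d IH] Hid; first by rewrite addn0.
  have Hid2 : i + d <= N by rewrite addnS in Hid; exact: ltnW.
  have [IH1 IH2] := IH Hid2.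
  rewrite -addn1 iotaD map_cat flatten_cat /= cats0 cat_path last_cat IH1 IH2 /=.
  have tN : i + d < N by rewrite addnS in Hid.
  have [/andP[pw /eqP lw] _] := HPi _ tN.
  rewrite lw addn1 addnS; split => //.
  by apply: path_zip_mem => x y H; apply/orP; left; exact: Wedge H.
have near : forall i d y, i + d <= N -> y \in st i :: flatten (map P (iota i d)) ->
    exists t, [/\ i <= t, t <= i + d & exists r, reach D r y (st t) /\ 2 * r <= M].
  move=> i d y Hid; rewrite inE => /orP[/eqP ->|].
    by exists i; split => //; [rewrite leq_addr | exists 0; split => //; exact: reach_refl].
  move=> /flatten_mapP [t]; rewrite mem_iota => /andP[it td] yP.
  have tN : t < N by apply: leq_trans td Hid.
  have [Hw Hs] := HPi _ tN.
  have [r1 [r2 [R1 R2 Er]]] := @walk_split _ _ _ _ _ Hw yP.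
  case: (leqP r1 r2) => Hr.
    exists t; split => //; first exact: ltnW.
    exists r1; split; first exact: reach_sym.
    rewrite -Er in Hs; lia.
  exists t.+1; split => //; first exact: leqW.
  exists r2; split => //; rewrite -Er in Hs; lia.
apply: NNPP => Hneg.
have NoBig : forall c', 3 <= size c' -> uniq c' -> cycle adjH c' -> size c' < L.
  move=> c' c3 uc cy; rewrite ltnNge; apply/negP => Lc; apply: Hneg.
  have ce : forall x y, (x, y) \in cycle_edges c' -> adjH x y := @cycle_mem_edges adjH c' cy.
  exists c'; split; first by split => //; split => //; exact: (sub_cycle HD cy).
  split; first exact: ce.
  rewrite EL Lc /= EU; apply: leq_trans (@cycle_count c' W c3 uc ce) _.
  rewrite /W; have := @size_flat_le (fun i => walk_edges (F (nth 0 c i)) (P i)) M (iota 0 N).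
  rewrite size_iota; apply => t; rewrite mem_iota add0n => /andP[_ tN].
  by rewrite /walk_edges size_zip /= (minn_idPr (leqnSn _)); have [_ ->] := HPi t tN.
have q2N : 2 * q <= N by rewrite /q; lia.
have q0N : 0 + q <= N by rewrite /q; lia.
pose R1 := flatten (map P (iota 0 q)).
pose R2 := flatten (map P (iota q q)).
pose R3 := flatten (map P (iota (2 * q) (N - 2 * q))).
have [p1 l1] := segp 0 q q0N.
have [p2 l2] : path adjH (st q) R2 /\ last (st q) R2 = st (2 * q).
  by rewrite mul2n -addnn; apply: segp; rewrite addnn -mul2n.
have [p3 l3] : path adjH (st (2 * q)) R3 /\ last (st (2 * q)) R3 = st 0.
  by have := segp (2 * q) (N - 2 * q); rewrite (subnKC q2N) stN; apply.
rewrite add0n in l1.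
set a1 := st 0 in p1 l1 l3 *.
set a2 := st q in p1 l1 p2 l2 *.
set a3 := st (2 * q) in p2 l2 p3 l3 *.
have p23 : path adjH a2 (R2 ++ R3) by rewrite cat_path p2 l2 p3.
have l23 : last a2 (R2 ++ R3) = a1 by rewrite last_cat l2 l3.
move: l1; case: (shortenP p1) => Q' pQ uQ subQ lQ.
pose P2 y := exists w r, [/\ w \in a2 :: R2, reach D r y w & 2 * r < L].
pose P3 y := exists w r, [/\ w \in a3 :: R3, reach D r y w & 2 * r < L].
have split23 : forall w, w \in a2 :: (R2 ++ R3) -> w \in a2 :: R2 \/ w \in a3 :: R3.
  move=> w; rewrite inE mem_cat => /orP[/eqP->|/orP[H|H]].
  - by left; rewrite inE eqxx.
  - by left; rewrite inE H orbT.
  - by right; rewrite inE H orbT.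
have cover : forall y, y \in a1 :: Q' -> P2 y \/ P3 y.
  move=> y yQ.
  case: (classic (y \in a2 :: (R2 ++ R3))) => Hy.
    by case: (split23 _ Hy) => H; [left|right]; exists y, 0; split => //; exact: reach_refl.
  have Hy' : y \notin a2 :: (R2 ++ R3) by apply/negP.
  have [w [wR [s [ps ls sz]]]] := @key adjH adjH_sym L NoBig _ _ pQ uQ _ _ p23 l23 lQ _ yQ Hy'.
  have rw : reach D (size s) y w by exists s; split => //; rewrite /walk (sub_path HD ps) ls eqxx.
  by case: (split23 _ wR) => H; [left|right]; exists w, (size s); split.
have P3a1 : P3 a1 by exists a1, 0; split => //; [rewrite -l3 mem_last | exact: reach_refl].
have P2a2 : P2 (last a1 Q') by rewrite lQ; exists a2, 0; split => //; [rewrite inE eqxx | exact: reach_refl].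
have [z [zQ [P3z Hz]]] := @ivt adjH P2 P3 _ _ pQ P3a1 P2a2 cover.
have zR1 : z \in st 0 :: flatten (map P (iota 0 q)).
  move: zQ; rewrite !inE => /orP[->//|/subQ ->]; by rewrite orbT.
have [z2 [r0 [Rz2 r01 P2z2]]] : exists z2 r0, [/\ reach D r0 z z2, r0 <= 1 & P2 z2].
  case: Hz => [H|[z' [ez H]]]; first by exists z, 0; split => //; exact: reach_refl.
  by exists z', 1; split => //; apply: reach_edge; exact: HD.
have [t1 [_ t1q [r1 [Rr1 r1M]]]] := near 0 q z q0N zR1.
have h3N : 2 * q + (N - 2 * q) <= N by rewrite (subnKC q2N).
case: P3z => w3 [r3 [w3R Rr3 r3L]].
have [t3 [t3l t3u [r3' [Rr3' r3M]]]] := near (2 * q) (N - 2 * q) w3 h3N w3R.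
have hqq : q + q <= N by rewrite addnn -mul2n.
case: P2z2 => w2 [r2 [w2R Rr2 r2L]].
have [t2 [t2l t2u [r2' [Rr2' r2M]]]] := near q q w2 hqq w2R.
have distb : forall t t' rr, reach D rr (st t) (st t') -> rr <= M + L ->
    cyc_dist N (t %% N) (t' %% N) <= dl.
  move=> t t' rr Hr Hrr.
  have [dv [Hdv dvr]] := reach_dist Hr.
  have tN := ltn_pmod t N0; have tN' := ltn_pmod t' N0.
  have := Hbil _ _ _ _ (Hvert _ tN) (Hvert _ tN') (Hcd _ _ tN tN') Hdv.
  case/andP => H _.
  have : 4 ^ p * cyc_dist N (t %% N) (t' %% N) <= 4 ^ p * dl.
    apply: leq_trans H _; apply: leq_trans dvr _; apply: leq_trans Hrr _.
    by rewrite /M /L /dl mulnDr addnC [4 ^ k * _]mulnC.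
  by rewrite leq_pmul2l ?expn_gt0.
have [b12 b13 b23] := @arith_fin _ _ _ _ _ _ _ _ r1M r01 r2L r2M r3L r3M.
have d12 := distb _ _ _ (reach_trans (reach_trans (reach_trans (reach_sym Rr1) Rz2) Rr2) Rr2') b12.
have d13 := distb _ _ _ (reach_trans (reach_trans (reach_sym Rr1) Rr3) Rr3') b13.
have d23 := distb _ _ _ (reach_trans (reach_trans (reach_trans (reach_trans (reach_sym Rr2') (reach_sym Rr2)) (reach_sym Rz2)) Rr3) Rr3') b23.
rewrite add0n in t1q; rewrite addnn -mul2n in t2u; rewrite (subnKC q2N) in t3u.
exact: (@comb _ _ _ _ _ dlN t1q t2l t2u t3l t3u d12 d13 d23).
Qed.

Local Open Scope ring_scope.

Theorem claim2p5 (n m k p : nat) (F : nat -> nat)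
  (Hn : (1 <= n)%N) (Hm : (1 <= m)%N) (Hk : (1 <= k)%N)
  (HF : forall u, (u < nv (Laakso n))%N -> (F u < nv (Diamond m))%N)
  (Hbil : forall u v du dv,
     (u < nv (Laakso n))%N -> (v < nv (Laakso n))%N ->
     is_dist (Laakso n) u v du -> is_dist (Diamond m) (F u) (F v) dv ->
     (4 ^ p * du <= dv <= 4 ^ k * 4 ^ p * du)%N)
  (h : nat) (Hh1 : (1 <= h)%N) (Hhn : (h <= n)%N)
  (Hh : ((4 ^ (h - 1))%:R : rat) <= (4 ^ h)%:R / 3 - 1 - (4 ^ k)%:R)
  (c : seq nat) (Hcsize : size c = (4 ^ h)%N)
  (Hc : isometric_cycle (Laakso n) c)
  (P : nat -> seq nat)
  (HP : forall i, (i < size c)%N ->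
     let a := F (nth 0%N c i) in
     let b := F (nth 0%N c (i.+1 %% size c)) in
     walk (Diamond m) a (P i) b /\ is_dist (Diamond m) a b (size (P i))) :
  let W := flatten [seq walk_edges (F (nth 0%N c i)) (P i) | i <- iota 0 (size c)] in
  exists c' : seq nat,
    is_cycle (Diamond m) c' /\
    (forall x y, (x, y) \in cycle_edges c' -> ((x, y) \in W) || ((y, x) \in W)) /\
    (4 ^ (p + h - 1) <= size c' <= 4 ^ (p + h + k))%N.
Proof.
have Hh' : (3 * 4 ^ (h - 1) + 3 + 3 * 4 ^ k <= 4 ^ h)%N.
  rewrite -(Num.Theory.ler_nat rat) !GRing.natrD.
  move: Hh; set a := ((4 ^ (h - 1))%:R : rat); set b := ((4 ^ k)%:R : rat); set d := ((4 ^ h)%:R : rat).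
  move=> Hh; lra.
exact: (@main_aux n m k p F Hk Hbil h Hh1 Hh' c Hcsize Hc P HP).
Qed.
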